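(* Let $G$ be a finite simple graph with at least $3$ vertices. If $\delta(G) \ge \widetilde{\alpha}(G)$, then $G$ is Hamiltonian.
   Context: $\delta(G)$ denotes the minimum degree of $G$. For disjoint vertex sets $S,T$, $E(S,T)$ is the set of edges with one end in $S$ and one in $T$. An $(s,t)$-bipartite-hole in $G$ consists of two disjoint sets of vertices $S$ and $T$ with $|S|=s$, $|T|=t$ and $E(S,T)=\emptyset$. The bipartite-hole-number $\widetilde{\alpha}(G)$ is the least integer $r$ which can be written as $r=s+t-1$ for some positive integers $s,t$ such that $G$ contains no $(s,t)$-bipartite-hole. (Equivalently, $\widetilde{\alpha}(G)$ is the maximum integer $r$ such that $G$ contains an $(s,t)$-bipartite-hole for every pair of non-negative integers $s,t$ with $s+t=r$.) *)

(* Defs.v *)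
(* A finite simple graph is a symmetric irreflexive
   relation [e : rel V] on a finite type [V]. *)
From mathcomp Require Import all_boot.
Set Implicit Arguments. Unset Strict Implicit. Unset Printing Implicit Defensive.

Section BHole.
Variables (V : finType) (e : rel V).

Definition deg (v : V) : nat := #|[set u | e v u]|.

(* minimum degree delta(G); the neutral element #|V| exceeds every degree
   of a loopless graph, so for nonempty V this is the true minimum. *)
Definition mindeg : nat := \big[minn/#|V|]_(v : V) deg v.

Definition has_bhole (s t : nat) : bool :=
  [exists S : {set V}, exists T : {set V},
     [&& [disjoint S & T], #|S| == s, #|T| == t &
         [forall x in S, forall y in T, ~~ e x y]]].

(* r can be written as s + t - 1 with s, t >= 1 and G has no (s,t)-hole *)
Definition bh_witness (r : nat) : bool :=
  [exists s : 'I_r.+1, (0 < s) && ~~ has_bhole s (r.+1 - s)].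

Lemma bh_witness_exists : exists r, bh_witness r.
Proof.
exists #|V|.+1; apply/existsP.
have Hs : #|V|.+1 < #|V|.+2 by [].
exists (Ordinal Hs) => /=.
apply/negP => /existsP [S /existsP [T /and4P [_ /eqP HS _ _]]].
by move: (max_card S); rewrite HS ltnn.
Qed.

Definition bhn : nat := ex_minn bh_witness_exists.

End BHole.

Definition hamiltonian (V : finType) (e : rel V) : Prop :=
  exists s : seq V, [/\ uniq s, (forall v, v \in s) & path.cycle e s].

(* Main.v *)
Require Import Defs.
From mathcomp Require Import all_boot.
From mathcomp Require Import zify.
Set Implicit Arguments. Unset Strict Implicit. Unset Printing Implicit Defensive.

Lemma bigmin_le_seq (I : eqType) (r : seq I) (F : I -> nat) n v :
  v \in r -> \big[minn/n]_(i <- r) F i <= F v.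
Proof.
elim: r => [//|x r IH]; rewrite inE big_cons => /orP [/eqP->|/IH H].
  by apply: geq_minl.
by apply: leq_trans (geq_minr _ _) H.
Qed.

Lemma mindeg_le (V : finType) (e : rel V) v : mindeg e <= deg e v.
Proof. by rewrite /mindeg; apply: bigmin_le_seq; rewrite mem_index_enum. Qed.

Lemma sub_of_card (V : finType) (A : {set V}) n :
  n <= #|A| -> exists B : {set V}, B \subset A /\ #|B| = n.
Proof.
move/card_geqP => [l [ul sl subl]]; exists [set x in l]; split.
  by apply/subsetP => x; rewrite inE => /subl.
by rewrite cardsE (card_uniqP ul).
Qed.

Lemma next_head (T : eqType) (y : T) L : next (y :: L) y = head y L.
Proof. by case: L => [|z L] /=; rewrite eqxx. Qed.

Lemma next_cat (T : eqType) (y : T) l1 l2 : uniq (l1 ++ y :: l2) ->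
  next (l1 ++ y :: l2) y = head y (l2 ++ l1).
Proof.
move=> U; rewrite -(next_rot (size l1) U) rot_size_cat.
by rewrite cat_cons next_head.
Qed.

Section Cyc.
Variables (V : finType) (e : rel V).
Hypothesis esym : symmetric e.

Lemma path_rev_sym a l : path e a l -> path e (last a l) (rev (belast a l)).
Proof.
move=> H; rewrite rev_path; apply: sub_path H => u v /=; by rewrite esym.
Qed.

Lemma ins_cycle (c : seq V) x P : uniq c -> cycle e c -> x \in c -> P != [::] ->
  uniq P -> all (fun v => v \notin c) P -> path e x P -> e (last x P) (next c x) ->
  exists c', [/\ uniq c', cycle e c' & size c < size c'].
Proof.
move=> Uc Cc xc P0 UP AP pP eL.
case: (rot_to xc) => i q Hrot.
have Uq : uniq (x :: q) by rewrite -Hrot rot_uniq.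
have Cq : cycle e (x :: q) by rewrite -Hrot rot_cycle.
have nx : next c x = head x q by rewrite -(next_rot i Uc) Hrot next_head.
have qc : forall v, v \in x :: q -> v \in c by move=> v; rewrite -Hrot mem_rot.
exists (x :: P ++ q); split.
- have pe : perm_eq (x :: P ++ q) (P ++ x :: q).
    by apply/permP => f; rewrite /= !count_cat /=; lia.
  rewrite (perm_uniq pe) cat_uniq UP Uq andbT.
  apply/hasPn => v /qc vc; apply/negP => vP.
  by move/allP: AP => /(_ v vP); rewrite vc.
- rewrite /= rcons_cat cat_path pP /=; rewrite nx in eL.
  move: Cq; rewrite /=.
  case: q {Hrot Uq nx qc} eL => [|z q] /= eL; first by rewrite eL.
  by case/andP => _ ->; rewrite eL.
- by rewrite -(size_rot i c) Hrot /= size_cat; case: P P0 {UP AP pP eL} => //= *; lia.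
Qed.

Lemma swap_cycle (c : seq V) x y P : uniq c -> cycle e c -> x \in c -> y \in c ->
  x != y -> P != [::] ->
  uniq P -> all (fun v => v \notin c) P -> path e x P -> e (last x P) y ->
  next c x != y -> next c y != x -> e (next c x) (next c y) ->
  exists c', [/\ uniq c', cycle e c' & size c < size c'].
Proof.
move=> Uc Cc xc yc xy P0 UP AP pP eL nxy nyx exy.
case: (rot_to xc) => i q Hrot.
have yq : y \in q.
  by move: yc; rewrite -(mem_rot i) Hrot inE eq_sym (negbTE xy).
move: Hrot; case/splitPr: yq => q1 q2 Hrot.
have Uq : uniq (x :: q1 ++ y :: q2) by rewrite -Hrot rot_uniq.
have Cq : cycle e (x :: q1 ++ y :: q2) by rewrite -Hrot rot_cycle.
have nx : next c x = head x (q1 ++ y :: q2) by rewrite -(next_rot i Uc) Hrot next_head.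
have ny : next c y = head y (q2 ++ x :: q1).
  by rewrite -(next_rot i Uc) Hrot -cat_cons next_cat.
have qc : forall v, v \in x :: q1 ++ y :: q2 -> v \in c by move=> v; rewrite -Hrot mem_rot.
case: q1 Hrot Uq Cq nx ny qc => [|x' A] Hrot Uq Cq nx ny qc.
  by rewrite nx eqxx in nxy.
case: q2 Hrot Uq Cq nx ny qc => [|y' B] Hrot Uq Cq nx ny qc.
  by rewrite ny eqxx in nyx.
rewrite /= in nx ny; rewrite nx ny in exy.
exists (x :: P ++ y :: rev (x' :: A) ++ y' :: B); split.
- have pe : perm_eq (x :: P ++ y :: rev (x' :: A) ++ y' :: B)
                    (P ++ x :: (x' :: A) ++ y :: y' :: B).
    apply/permP => f; rewrite /= !count_cat /= !count_cat count_rev /=.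
    move: (nat_of_bool (f x)) (nat_of_bool (f y)) (nat_of_bool (f x')) (nat_of_bool (f y')) (count f P) (count f A) (count f B) => a b c1 d p1 p2 p3; clear -a b c1 d p1 p2 p3; lia.
  rewrite (perm_uniq pe) cat_uniq UP Uq andbT.
  apply/hasPn => v /qc vc; apply/negP => vP.
  by move/allP: AP => /(_ v vP); rewrite vc.
- rewrite /= rcons_cat cat_path pP /= eL /= rcons_cat cat_path.
  move: Cq; rewrite /= rcons_cat cat_path /= => /and3P [ex' pA /andP [eAy pB]].
  have : path e x' (rcons A y) by rewrite rcons_path pA eAy.
  move/path_rev_sym; rewrite last_rcons belast_rcons => ->.
  by rewrite rev_cons last_rcons exy /=; case/andP: pB.
- rewrite -(size_rot i c) Hrot /= !size_cat /= !size_cat size_rev /=.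
  case: P P0 {UP AP pP eL} => //= p P' _; move: (size P') (size A) (size B) => a b d; clear; lia.
Qed.
End Cyc.

From Stdlib Require Import Classical_Prop.

Lemma path_allQ (T : Type) (r : rel T) (Q : pred T) a p :
  (forall x y, r x y -> Q y) -> Q a -> path r a p -> all Q (a :: p).
Proof.
move=> rQ; elim: p a => [|z p IH] a Qa /=; first by rewrite Qa.
case/andP => raz pp; rewrite Qa /=; apply: IH pp; exact: rQ raz.
Qed.

Lemma disjP (V : finType) (A B : {set V}) :
  (forall x, x \in A -> x \in B -> False) -> [disjoint A & B].
Proof.
move=> H; rewrite disjoints_subset; apply/subsetP => x xA; rewrite inE.
by apply/negP => /(H x xA).
Qed.

Section Main.
Variables (V : finType) (e : rel V).
Hypotheses (esym : symmetric e) (eirr : irreflexive e).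
Variables s t : nat.
Hypotheses (s1 : 0 < s) (st : s <= t).
Hypothesis dense : forall S T : {set V}, [disjoint S & T] -> s <= #|S| -> t <= #|T| ->
  [exists x in S, exists y in T, e x y].
Hypothesis degb : forall v, s + t <= (deg e v).+1.

Lemma extend (c : seq V) v0 v : uniq c -> cycle e c -> v0 \in c -> v \notin c ->
  exists c', [/\ uniq c', cycle e c' & size c < size c'].
Proof.
move=> Uc Cc v0c vnc.
apply: NNPP => NL.
have NL' : forall c', uniq c' -> cycle e c' -> size c < size c' -> False.
  by move=> c' *; apply NL; exists c'.
have [h [x0 [hnc x0c ehx0]]] : exists h x0, [/\ h \notin c, x0 \in c & e h x0].
  apply: NNPP => N1.
  have N1' : forall h x, h \notin c -> x \in c -> ~~ e h x.
    by move=> h x hc xc; apply/negP => ehx; apply N1; exists h, x.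
  pose C := [set u | u \in c].
  have := dense (S := C) (T := ~: C).
  rewrite disjoints_subset setCK subxx => /(_ isT).
  have -> : s <= #|C|.
    have : [set u | e v0 u] \subset C.
      apply/subsetP => u; rewrite !inE => ev; apply/negPn/negP => unc.
      by move: (N1' u v0 unc v0c); rewrite esym ev.
    move/subset_leq_card; move: (degb v0); rewrite /deg; lia.
  have -> : t <= #|~: C|.
    have : [set u | e v u] \subset ~: C.
      apply/subsetP => u; rewrite !inE => ev; apply/negP => uc.
      by move: (N1' v u vnc uc); rewrite ev.
    move/subset_leq_card; move: (degb v); rewrite /deg; lia.
  move=> /(_ isT isT) /existsP [x /andP [xC /existsP [y /andP [yC exy]]]].
  move: xC yC; rewrite !inE => xc ync.
  by move: (N1' y x ync xc); rewrite esym exy.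
pose eD := [rel a b | e a b && (a \notin c) && (b \notin c)].
have eDsym : symmetric eD by move=> a b /=; rewrite esym andbAC.
have csym := sym_connect_sym eDsym.
pose H := [set u | connect eD h u].
have eDQ : forall a b, eD a b -> b \notin c by move=> a b /andP [_ ->].
have Hnc : forall u, u \in H -> u \notin c.
  move=> u; rewrite inE => /connectP [p pp ->].
  have := path_allQ eDQ hnc pp; move/allP; apply; exact: mem_last.
have Hclos : forall u w, u \in H -> e u w -> w \notin c -> w \in H.
  move=> u w uH euw wnc; move: (Hnc u uH) => unc; move: uH; rewrite !inE => hu.
  by apply: connect_trans hu (connect1 _); rewrite /= euw wnc unc.
have hH : h \in H by rewrite inE connect0.
have Hpath : forall u w, u \in H -> w \in H -> exists p,
    [/\ uniq (u :: p), all (fun v => v \notin c) (u :: p), path e u p & last u p = w].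
  move=> u w uH wH; move: (Hnc u uH) => unc.
  have cu : connect eD u w.
    move: uH wH; rewrite !inE => hu hw; apply: connect_trans hw; by rewrite csym.
  case/connectP: cu => p pp ->; case: (shortenP pp) => p' pp' Up' _.
  exists p'; split => //; first exact: path_allQ eDQ unc pp'.
  by apply: sub_path pp' => a b /andP [/andP [->]].
pose X := [set x | (x \in c) && [exists u in H, e u x]].
have XP : forall x, x \in X -> x \in c /\ exists u, u \in H /\ e u x.
  by move=> x; rewrite inE => /andP [xc /existsP [u /andP [uH eux]]]; split => //; exists u.
have XI : forall x u, x \in c -> u \in H -> e u x -> x \in X.
  by move=> x u xc uH eux; rewrite inE xc; apply/existsP; exists u; rewrite uH.
have F1 : forall x, x \in X -> next c x \notin X.
  move=> x xX; apply/negP => nX.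
  case: (XP x xX) => xc [u [uH eux]]; case: (XP _ nX) => _ [w [wH ew]].
  case: (Hpath u w uH wH) => p [Up Ap pp lp].
  have p1 : path e x (u :: p) by rewrite /= esym eux pp.
  have p2 : e (last x (u :: p)) (next c x) by rewrite /= lp.
  have [c' [U' C' S']] := ins_cycle Uc Cc xc (isT : (u :: p) != [::]) Up Ap p1 p2.
  exact: NL' U' C' S'.
have F2 : forall x y, x \in X -> y \in X -> x != y -> ~~ e (next c x) (next c y).
  move=> x y xX yX xy; apply/negP => exy.
  case: (XP x xX) => xc [u [uH eux]]; case: (XP y yX) => yc [w [wH ewy]].
  case: (Hpath u w uH wH) => p [Up Ap pp lp].
  have nxy : next c x != y by apply/eqP => E; move: (F1 x xX); rewrite E yX.
  have nyx : next c y != x by apply/eqP => E; move: (F1 y yX); rewrite E xX.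
  have p1 : path e x (u :: p) by rewrite /= esym eux pp.
  have p2 : e (last x (u :: p)) y by rewrite /= lp.
  have [c' [U' C' S']] := swap_cycle esym Uc Cc xc yc xy (isT : (u :: p) != [::]) Up Ap p1 p2 nxy nyx exy.
  exact: NL' U' C' S'.
have injn : injective (next c) := can_inj (prev_next Uc).
pose Xp := [set next c x | x in X].
have cXp : #|Xp| = #|X| by rewrite card_imset.
have XpP : forall z, z \in Xp -> [/\ z \in c, z \notin X & forall u, u \in H -> ~~ e u z].
  move=> z /imsetP [x xX ->]; case: (XP x xX) => xc _.
  have nc : next c x \in c by rewrite mem_next.
  split => //; first exact: F1.
  move=> u uH; apply/negP => eun; move: (F1 x xX); by rewrite (XI _ u nc uH eun).
have x0X : x0 \in X by apply: XI x0c hH _; rewrite ehx0.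
have kX1 : 0 < #|X| by apply/card_gt0P; exists x0.
have degh : s + t <= #|H| + #|X|.
  have sub : [set u | e h u] \subset (H :\ h) :|: X.
    apply/subsetP => u; rewrite inE => ehu.
    case uc: (u \in c).
      by rewrite in_setU (XI u h uc hH ehu) orbT.
    have uH : u \in H by apply: Hclos hH ehu _; rewrite uc.
    rewrite in_setU in_setD1 uH andbT; apply/orP; left; apply/negP => /eqP E.
    by move: ehu; rewrite E eirr.
  have := leq_trans (subset_leq_card sub) (leq_card_setU _ _).
  rewrite (cardsD1 h H) hH; move: (degb h); rewrite /deg.
  move: #|[set u | e h u]| #|H :\ h| #|X| s t => a b d s' t'; clear; lia.
case: (leqP s #|X|) => [sk | ks].
- have [S0 [S0sub cS0]] : exists S0 : {set V}, S0 \subset Xp /\ #|S0| = s.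
    by apply: sub_of_card; rewrite cXp.
  pose T := H :|: (Xp :\: S0).
  have dST : [disjoint S0 & T].
    apply: disjP => x xS; rewrite in_setU in_setD => /orP [xH | /andP [xnS _]].
    + case: (XpP x (subsetP S0sub x xS)) => xc _ _.
      by move: (Hnc x xH); rewrite xc.
    + by rewrite xS in xnS.
  have cT : #|T| = #|H| + (#|X| - s).
    rewrite /T cardsU cardsD (setIidPr S0sub) cS0 cXp.
    have -> : H :&: (Xp :\: S0) = set0.
      apply: disjoint_setI0; apply: disjP => x xH; rewrite inE => /andP [_ xXp].
      case: (XpP x xXp) => xc _ _; by move: (Hnc x xH); rewrite xc.
    by rewrite cards0 subn0.
  have := dense dST; rewrite cS0 leqnn cT => /(_ isT).
  have -> : t <= #|H| + (#|X| - s) by move: degh sk; move: #|H| #|X| s t => a b s' t'; clear; lia.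
  move=> /(_ isT) /existsP [x /andP [xS /existsP [y /andP [yT exy]]]].
  have xXp := subsetP S0sub x xS.
  move: yT; rewrite in_setU in_setD => /orP [yH | /andP [ynS yXp]].
  + case: (XpP x xXp) => _ _ /(_ y yH); by rewrite esym exy.
  + move: xXp yXp => /imsetP [x1 x1X Ex] /imsetP [y1 y1X Ey].
    have x1y1 : x1 != y1 by apply/eqP => E; move: ynS; rewrite Ey -E -Ex xS.
    by move: (F2 x1 y1 x1X y1X x1y1); rewrite -Ex -Ey exy.
- pose W := ~: (H :|: X).
  pose z := next c x0.
  have zXp : z \in Xp by apply/imsetP; exists x0.
  case: (XpP z zXp) => zc znX znH.
  have zW : z \in W by rewrite in_setC in_setU negb_or znX andbT; apply/negP => /Hnc; rewrite zc.
  have degz : s + t <= #|W| + #|X|.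
    have sub : [set u | e z u] \subset (W :\ z) :|: X.
      apply/subsetP => u; rewrite inE => ezu.
      rewrite in_setU; case uX: (u \in X); first by rewrite orbT.
      rewrite orbF in_setD1; apply/andP; split.
        by apply/negP => /eqP E; move: ezu; rewrite E eirr.
      rewrite in_setC in_setU negb_or uX andbT.
      apply/negP => uH; move: (znH u uH); by rewrite esym ezu.
    have := leq_trans (subset_leq_card sub) (leq_card_setU _ _).
    rewrite (cardsD1 z W) zW; move: (degb z); rewrite /deg.
    move: #|[set u | e z u]| #|W :\ z| #|X| s t => a b d s' t'; clear; lia.
  have dWH : [disjoint W & H].
    by apply: disjP => x; rewrite in_setC in_setU negb_or => /andP [/negP xnH _].
  have := dense dWH.
  have -> : s <= #|W| by move: degz ks st; move: #|W| #|X| s t => a b s' t'; clear; lia.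
  have -> : t <= #|H| by move: degh ks; move: #|H| #|X| s t => a b s' t'; clear; lia.
  move=> /(_ isT isT) /existsP [w /andP [wW /existsP [u /andP [uH ewu]]]].
  move: wW; rewrite in_setC in_setU negb_or => /andP [wnH wnX].
  case wc: (w \in c).
  + by move: wnX; rewrite (XI w u wc uH _) // esym.
  + have euw : e u w by rewrite esym.
    have wnc : w \notin c by rewrite wc.
    by rewrite (Hclos u w uH euw wnc) in wnH.
Qed.

Lemma ham_of (v0 : V) : hamiltonian e.
Proof.
have : 0 < #|[set u | e v0 u]|.
  move: (degb v0) s1 st; rewrite /deg; move: #|[set u | e v0 u]| s t => a s' t'; clear; lia.
case/card_gt0P => u; rewrite inE => evu.
have main : forall n (c : seq V), #|V| - size c <= n -> uniq c -> cycle e c ->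
    (exists a, a \in c) -> hamiltonian e.
  elim=> [|n IH] c hn Uc Cc [a ac];
    (case: (boolP [forall v, v \in c]) => [/forallP Hall | /forallPn [v vnc]];
     [by exists c | ]);
    have [c' [U' C' S']] := extend Uc Cc ac vnc;
    have := max_card (mem c'); rewrite (card_uniqP U') => sz.
  + by move: hn S' sz; move: #|V| (size c) (size c') => a1 b1 d1; clear; lia.
  + apply: (IH c') => //.
      by move: hn S' sz; move: #|V| (size c) (size c') => a1 b1 d1; clear; lia.
    case: c' {U' C' sz} S' => [|a' c''] //= _; exists a'; exact: mem_head.
apply: (main #|V| [:: v0; u]).
- by rewrite leq_subr.
- by rewrite /= inE andbT; apply/negP => /eqP E; move: evu; rewrite E eirr.
- by rewrite /= evu esym evu.
- by exists v0; rewrite inE eqxx.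
Qed.
End Main.

Lemma dense_of (V : finType) (e : rel V) s t : ~~ has_bhole e s t ->
  forall S T : {set V}, [disjoint S & T] -> s <= #|S| -> t <= #|T| ->
  [exists x in S, exists y in T, e x y].
Proof.
move=> nh S T dST sS tT; apply: contraNT nh => nE.
have [S' [S'S cS']] := sub_of_card sS.
have [T' [T'T cT']] := sub_of_card tT.
apply/existsP; exists S'; apply/existsP; exists T'.
rewrite cS' cT' !eqxx /=; apply/andP; split.
  by apply: disjointWl S'S _; rewrite disjoint_sym; apply: disjointWl T'T _; rewrite disjoint_sym.
apply/forallP => x; apply/implyP => xS'; apply/forallP => y; apply/implyP => yT'.
apply/negP => exy; move/negP: nE; apply; apply/existsP; exists x; rewrite (subsetP S'S x xS') /=.
by apply/existsP; exists y; rewrite (subsetP T'T y yT').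
Qed.

Theorem theorem2 (V : finType) (e : rel V) :
  symmetric e -> irreflexive e -> 3 <= #|V| ->
  bhn e <= mindeg e ->
  hamiltonian e.
Proof.
move=> esym eirr n3.
have : 0 < #|V| by move: n3; move: #|V| => a; clear; lia.
case/card_gt0P => v0 _.
rewrite /bhn; case: ex_minnP => r Hr _ hr.
case/existsP: Hr => s0 /andP [s0pos nhole].
have s0r : (s0 : nat) <= r by rewrite -ltnS ltn_ord.
set t0 := r.+1 - s0 in nhole.
have dg : forall v, s0 + t0 <= (deg e v).+1.
  move=> v; have := leq_trans hr (mindeg_le e v); rewrite /t0; lia.
have dn := dense_of nhole.
case: (leqP s0 t0) => st.
- exact: (ham_of esym eirr s0pos st dn dg v0).
- have t1 : 0 < t0 by rewrite /t0; lia.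
  have dn' : forall S T : {set V}, [disjoint S & T] -> t0 <= #|S| -> s0 <= #|T| ->
      [exists x in S, exists y in T, e x y].
    move=> S T dST tS sT; have := dn T S; rewrite disjoint_sym => /(_ dST sT tS).
    case/existsP => y /andP [yT /existsP [x /andP [xS eyx]]].
    by apply/existsP; exists x; rewrite xS; apply/existsP; exists y; rewrite yT esym.
  have dg' : forall v, t0 + s0 <= (deg e v).+1 by move=> v; rewrite addnC.
  exact: (ham_of esym eirr t1 (ltnW st) dn' dg' v0).
Qed.
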